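(* For all integers $n\ge 2$ and $M\ge 1$, $C_{CD}(n,M)\ge C_{AD}(n,M)\ge \frac{n}{2}\log_2 M$.
   Context: There are $n$ nodes labeled $1,\dots,n$; node $i$ privately holds an input $x_i\in\{1,\dots,M\}$. Communication is over private point-to-point links of a fully connected synchronous network. A deterministic protocol $P$ is a fixed finite schedule of steps $l=1,\dots,L(P)$; in step $l$ a prescribed node $T_l$ sends to a prescribed node $R_l\neq T_l$ one symbol $f_l(x_{T_l},T_l^+(l))$, where $T_l^+(l)$ is the sequence of symbols $T_l$ has received in steps $1,\dots,l-1$; only $R_l$ receives it. Its complexity is $C(P)=\sum_{l}\log_2 S_l(P)$, with $S_l(P)$ the number of distinct values of the step-$l$ symbol over all inputs in $\{1,\dots,M\}^n$. At the end each node $i$ outputs a bit $EQ_i$ depending on $x_i$ and the symbols it received. $P$ solves MEQ-AD$(n,M)$ if for every input, $EQ_1=\cdots=EQ_n=0$ iff $x_1=\cdots=x_n$; $P$ solves MEQ-CD$(n,M)$ if for every input, $EQ_n=0$ iff $x_1=\cdots=x_n$. $C_{AD}(n,M)$ and $C_{CD}(n,M)$ are the infima of $C(P)$ over protocols solving MEQ-AD$(n,M)$, respectively MEQ-CD$(n,M)$. *)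

(* Defs.v *)
From HB Require Import structures.
From mathcomp Require Import all_boot all_order all_algebra.
From mathcomp Require Import classical_sets reals exp.
Set Implicit Arguments. Unset Strict Implicit. Unset Printing Implicit Defensive.
Import Order.TTheory GRing.Theory Num.Theory.

(* Nodes 1..n are represented by 'I_n (node k+1 <-> ordinal k);
   inputs 1..M are represented by 'I_M (value v+1 <-> ordinal v).
   Symbols are natural numbers (w.l.o.g.: only finitely many values occur).
   Steps l = 1..L are represented by 0..L-1. *)
Record protocol (n M : nat) := Protocol {
  plen : nat;
  psend : nat -> 'I_n;
  precv : nat -> 'I_n;
  pmsg : nat -> 'I_M -> seq nat -> nat;        (* f_l (x_{T_l}, T_l^+(l)) *)
  pout : 'I_n -> 'I_M -> seq nat -> bool;      (* EQ_i (x_i, symbols received) *)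
  pdistinct : forall l, l < plen -> psend l != precv l
}.

Section Exec.
Variables (n M : nat) (P : protocol n M).

Definition received (h : seq nat) (i : 'I_n) : seq nat :=
  [seq nth 0%N h k | k <- iota 0 (size h) & precv P k == i].

Fixpoint history (x : {ffun 'I_n -> 'I_M}) (l : nat) : seq nat :=
  match l with
  | 0 => [::]
  | l'.+1 => let h := history x l' in
             rcons h (pmsg P l' (x (psend P l')) (received h (psend P l')))
  end.

Definition symbol (x : {ffun 'I_n -> 'I_M}) (l : nat) : nat :=
  nth 0%N (history x l.+1) l.

Definition EQ (x : {ffun 'I_n -> 'I_M}) (i : 'I_n) : bool :=
  pout P i (x i) (received (history x (plen P)) i).

Definition Snum (l : nat) : nat :=
  size (undup [seq symbol x l | x <- enum {ffun 'I_n -> 'I_M}]).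

Definition log2 {R : realType} (r : R) : R := (ln r / ln 2)%R.

Definition cost (R : realType) : R :=
  (\sum_(l < plen P) log2 ((Snum l)%:R : R))%R.

Definition all_equal (x : {ffun 'I_n -> 'I_M}) : Prop :=
  forall i j : 'I_n, x i = x j.

Definition solves_AD : Prop :=
  forall x, (forall i, EQ x i = false) <-> all_equal x.

(* node n is the ordinal with value n-1 *)
Definition solves_CD : Prop :=
  forall x (i : 'I_n), val i = n.-1 -> (EQ x i = false <-> all_equal x).

End Exec.

Definition C_AD (R : realType) (n M : nat) : R :=
  inf [set c : R | exists P : protocol n M, solves_AD P /\ c = cost P R].

Definition C_CD (R : realType) (n M : nat) : R :=
  inf [set c : R | exists P : protocol n M, solves_CD P /\ c = cost P R].

(* Main.v *)
Require Import Defs.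
From mathcomp Require Import all_boot all_order all_algebra.
From mathcomp Require Import classical_sets reals exp.
Set Implicit Arguments. Unset Strict Implicit. Unset Printing Implicit Defensive.
Import Order.TTheory GRing.Theory Num.Theory.

Section Aux.
Variables (n M : nat) (P : protocol n M).

Lemma size_history x l : size (history P x l) = l.
Proof. by elim: l => //= l IH; rewrite size_rcons IH. Qed.

Lemma history_mkseq x l : history P x l = mkseq (symbol P x) l.
Proof.
elim: l => // l IH; rewrite mkseqS -IH /symbol.
rewrite [history P x l.+1]/= nth_rcons size_history ltnn eqxx. by [].
Qed.

Lemma received_mkseq g l i :
  received P (mkseq g l) i = [seq g k | k <- iota 0 l & precv P k == i].
Proof.
rewrite /received size_mkseq. apply/eq_in_map => k.
by rewrite mem_filter mem_iota add0n => /andP[_ /andP[_ kl]]; rewrite nth_mkseq.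
Qed.

Lemma symbolE x l : symbol P x l =
  pmsg P l (x (psend P l)) [seq symbol P x k | k <- iota 0 l & precv P k == psend P l].
Proof.
rewrite /symbol /= nth_rcons size_history ltnn eqxx history_mkseq.
by rewrite received_mkseq.
Qed.

Lemma EQE x i : EQ P x i = pout P i (x i) [seq symbol P x k | k <- iota 0 (plen P) & precv P k == i].
Proof. by rewrite /EQ history_mkseq received_mkseq. Qed.

End Aux.

Section Key.
Variables (n M : nat) (P : protocol n M).
Hypothesis n2 : (2 <= n)%N.
Hypothesis HAD : solves_AD P.

Definition cst (a : 'I_M) : {ffun 'I_n -> 'I_M} := [ffun => a].
Definition inc (i : 'I_n) (l : nat) := (psend P l == i) || (precv P l == i).

Lemma key (i : 'I_n) (a b : 'I_M) :
  (forall l, (l < plen P)%N -> inc i l -> symbol P (cst a) l = symbol P (cst b) l) ->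
  a = b.
Proof.
move=> H.
pose mx : {ffun 'I_n -> 'I_M} := [ffun j => if j == i then b else a].
pose G k := if psend P k == i then symbol P (cst b) k else symbol P (cst a) k.
have dis k : (k < plen P)%N -> precv P k == i -> psend P k != i.
  by move=> kl /eqP <-; apply: pdistinct.
have HG : forall l, (l < plen P)%N -> symbol P mx l = G l.
  elim/ltn_ind => l IH lp.
  rewrite symbolE /G ffunE.
  case: ifP => si.
    rewrite (symbolE P (cst b)) ffunE; congr pmsg.
    apply/eq_in_map => k; rewrite mem_filter mem_iota add0n => /andP[rk /andP[_ kl]].
    have kp : (k < plen P)%N by apply: ltn_trans kl lp.
    rewrite IH // /G; rewrite (negbTE (dis k kp _)); last by rewrite -(eqP si).
    by apply: H => //; rewrite /inc orbC -(eqP si) rk.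
  rewrite (symbolE P (cst a)) ffunE; congr pmsg.
  apply/eq_in_map => k; rewrite mem_filter mem_iota add0n => /andP[rk /andP[_ kl]].
  have kp : (k < plen P)%N by apply: ltn_trans kl lp.
  rewrite IH // /G; case: ifP => // ski.
  by symmetry; apply: H => //; rewrite /inc ski.
have : all_equal mx.
  apply/(HAD mx) => j; rewrite EQE ffunE.
  case: ifP => ji.
    have <- : EQ P (cst b) j = false by apply: (proj2 (HAD (cst b))) => ? ?; rewrite !ffunE.
    rewrite EQE ffunE; congr pout.
    apply/eq_in_map => k; rewrite mem_filter mem_iota add0n => /andP[rk /andP[_ kl]].
    rewrite HG // /G (negbTE (dis k kl _)); last by rewrite -(eqP ji).
    by apply: H => //; rewrite /inc orbC -(eqP ji) rk.
  have <- : EQ P (cst a) j = false by apply: (proj2 (HAD (cst a))) => ? ?; rewrite !ffunE.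
  rewrite EQE ffunE; congr pout.
  apply/eq_in_map => k; rewrite mem_filter mem_iota add0n => /andP[rk /andP[_ kl]].
  rewrite HG // /G; case: ifP => // ski.
  by symmetry; apply: H => //; rewrite /inc ski.
have [j ji] : exists j : 'I_n, j != i.
  case: (eqVneq (val i) 0%N) => i0.
    have h1 : (1 < n)%N by [].
    by exists (Ordinal h1); apply/eqP => /(congr1 val) /=; rewrite i0.
  have h0 : (0 < n)%N by apply: leq_trans n2.
  by exists (Ordinal h0); apply/eqP => /(congr1 val) /= /esym; apply/eqP.
move=> /(_ i j); rewrite !ffunE eqxx (negbTE ji) => ->.
by [].
Qed.
End Key.

Lemma card_lt (N s : nat) : (s <= N)%N -> #|[pred v : 'I_N | (v < s)%N]| = s.
Proof.
move=> sN; rewrite -sum1_card.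
rewrite (eq_bigl (fun v : 'I_N => (v < s)%N)) //.
rewrite (big_ord_narrow sN).
by rewrite sum1_card card_ord.
Qed.

Lemma foldr_prod (T : finType) (g : T -> nat) : foldr muln 1%N [seq g x | x : T] = (\prod_(x : T) g x)%N.
Proof. by rewrite -big_enum /= -(big_map g predT id) -foldrE. Qed.

Section Count.
Variables (n M : nat) (P : protocol n M).
Hypothesis n2 : (2 <= n)%N.
Hypothesis HAD : solves_AD P.

Definition U l := undup [seq symbol P x l | x <- enum {ffun 'I_n -> 'I_M}].

Lemma Snum_le l : (Snum P l <= M ^ n)%N.
Proof.
rewrite /Snum; apply: leq_trans (size_undup _) _.
by rewrite size_map -cardE card_ffun !card_ord.
Qed.

Lemma idx_lt a l : (index (symbol P (cst n a) l) (U l) < Snum P l)%N.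
Proof.
rewrite /Snum -/(U l) index_mem mem_undup; apply/mapP.
by exists (cst n a) => //; rewrite mem_enum.
Qed.

Lemma count_i (i : 'I_n) :
  (M <= \prod_(l < plen P | inc P i l) Snum P l)%N.
Proof.
pose N := (M ^ n).+1.
pose F (l : 'I_(plen P)) : pred 'I_N := [pred v : 'I_N | (v < (if inc P i l then Snum P l else 1))%N].
pose f (a : 'I_M) : {dffun forall l : 'I_(plen P), 'I_N} :=
  [ffun l : 'I_(plen P) => inord (if inc P i l then index (symbol P (cst n a) l) (U l) else 0)].
have finj : injective f.
  move=> a b /ffunP fab; apply: (key n2 HAD (i := i)) => l lp il.
  have := fab (Ordinal lp); rewrite !ffunE /= il => /(congr1 val).
  have hN c : (index (symbol P (cst n c) l) (U l) < N)%N.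
    by apply: leq_trans (idx_lt c l) _; apply: leqW; apply: Snum_le.
  move=> /=; rewrite !inordK // => eab.
  have mem c : symbol P (cst n c) l \in U l.
    by rewrite mem_undup; apply/mapP; exists (cst n c) => //; rewrite mem_enum.
  by rewrite -(nth_index 0 (mem a)) eab nth_index.
have -> : (\prod_(l < plen P | inc P i l) Snum P l = #|(family F : simpl_pred {dffun forall l : 'I_(plen P), 'I_N})|)%N.
  rewrite card_family foldr_prod big_mkcond /=; apply: eq_bigr => l _.
  rewrite card_lt; first by case: ifP.
  by case: ifP => _; [apply: leqW; apply: Snum_le | ].
rewrite -[M in (M <= _)%N]card_ord -(card_image finj).
apply: subset_leq_card; apply/fintype.subsetP => g /mapP [a _ ->].
apply/familyP => l; rewrite !ffunE inE /=.
case: ifP => il; rewrite inordK //.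
- exact: idx_lt.
- by apply: leq_trans (idx_lt a l) _; apply: leqW; apply: Snum_le.
Qed.
End Count.

Local Open Scope ring_scope.

Lemma ln_prod (R : realType) (I : Type) (r : seq I) (Pr : pred I) (f : I -> R) :
  (forall i, Pr i -> 0 < f i) ->
  ln (\prod_(i <- r | Pr i) f i) = \sum_(i <- r | Pr i) ln (f i).
Proof.
move=> fpos.
pose K (y1 y2 : R) := 0 < y2 /\ y1 = ln y2.
suff [] : K (\sum_(i <- r | Pr i) ln (f i)) (\prod_(i <- r | Pr i) f i) by move=> _ ->.
apply: big_rec2; first by split; [exact: ltr01 | rewrite ln1].
move=> i y1 y2 Pi [y2p ->]; split; first by rewrite mulr_gt0 // fpos.
by rewrite lnM // posrE ?fpos.
Qed.

Section Real.
Variables (R : realType) (n M : nat) (P : protocol n M).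
Hypothesis n2 : (2 <= n)%N.
Hypothesis M1 : (1 <= M)%N.
Hypothesis HAD : solves_AD P.

Lemma Snum_gt0 l : (0 < Snum P l)%N.
Proof. exact: leq_ltn_trans (leq0n _) (idx_lt P (Ordinal M1) l). Qed.

Lemma cost_lb : (n%:R / 2) * log2 (M%:R : R) <= cost P R.
Proof.
pose g (l : nat) : R := ln (Snum P l)%:R.
have gi (i : 'I_n) : ln (M%:R : R) <= \sum_(l < plen P | inc P i l) g l.
  rewrite /g -ln_prod; last by move=> l _; rewrite ltr0n Snum_gt0.
  rewrite ler_ln ?posrE ?ltr0n // -?natr_prod ?ler_nat ?count_i //.
  by rewrite ltr0n prodn_gt0 // => l; rewrite Snum_gt0.
have hsum : n%:R * ln (M%:R : R) <= 2 * \sum_(l < plen P) g l.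
  have -> : n%:R * ln (M%:R : R) = \sum_(i < n) ln (M%:R : R).
    by rewrite sumr_const card_ord mulr_natl.
  apply: le_trans (ler_sum _ (fun i _ => gi i)) _.
  rewrite (eq_bigr (fun i => \sum_(l < plen P) (if inc P i l then g l else 0)));
    last by move=> i _; rewrite big_mkcond.
  rewrite exchange_big /= mulr_sumr; apply: ler_sum => l _.
  rewrite -big_mkcond /= sumr_const.
  have -> : #|[pred i : 'I_n | inc P i l]| = 2%N.
    transitivity #|[set psend P l; precv P l]|; last by rewrite cards2 (pdistinct (ltn_ord l)).
    by apply: eq_card => i; rewrite !inE /inc ![_ == i]eq_sym.
  by rewrite mulr_natl.
rewrite /cost /log2 -mulr_suml -/(\sum_(l < plen P) g l).
have l2 : 0 < ln (2 : R) by apply: ln_gt0; rewrite ltr1n.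
rewrite mulrA ler_pM2r ?invr_gt0 //.
rewrite mulrAC ler_pdivrMr ?ltr0n // mulrC.
by rewrite mulrC [X in _ <= X]mulrC.
Qed.
End Real.

Section Triv.
Variables (n' M : nat).

Lemma triv_dist (l : nat) : (l < n')%N -> (inord l : 'I_n'.+1) != ord_max.
Proof.
move=> ln; apply/eqP => /(congr1 val) /=; rewrite inordK; last by apply: ltnW.
by move=> e; rewrite e ltnn in ln.
Qed.

Definition trivP : protocol n'.+1 M :=
  @Protocol n'.+1 M n' (fun l => inord l) (fun _ => ord_max)
    (fun _ v _ => val v) (fun _ v r => ~~ all (fun s => s == val v) r)
    triv_dist.

Lemma trivP_CD : solves_CD trivP.
Proof.
move=> x i vi.
have -> : i = ord_max by apply: val_inj.
rewrite EQE.
have -> : [seq symbol trivP x k | k <- iota 0 n' & precv trivP k == ord_max]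
          = [seq val (x (inord k)) | k <- iota 0 n'].
  rewrite (eq_filter (a2 := xpredT)); last by move=> k; rewrite /= eqxx.
  rewrite filter_predT.
  by apply: eq_map => k; rewrite symbolE.
split.
- move/negbFE/allP => H.
  have Hm (j : 'I_n'.+1) : x j = x ord_max.
    case: (ltnP j n') => jn.
      have jm : (j : nat) \in iota 0 n' by rewrite mem_iota add0n jn.
      have := H _ (map_f (fun k => val (x (inord k))) jm).
      by rewrite inord_val => /eqP /val_inj.
    have -> : j = ord_max by apply: val_inj; apply/eqP; rewrite eqn_leq jn -ltnS ltn_ord.
    by [].
  by move=> a b; rewrite !Hm.
- move=> He; apply/negbF/allP => s /mapP [k _ ->].
  by rewrite (He (inord k) ord_max).
Qed.
End Triv.

Local Open Scope classical_set_scope.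

Definition toAD n M (P : protocol n M) : protocol n M :=
  @Protocol n M (plen P) (psend P) (precv P) (pmsg P)
    (fun i v r => if val i == n.-1 then pout P i v r else false) (@pdistinct _ _ P).

Lemma toAD_cost (R : realType) n M (P : protocol n M) : cost (toAD P) R = cost P R.
Proof. by []. Qed.

Lemma toAD_EQ n M (P : protocol n M) x i :
  EQ (toAD P) x i = if val i == n.-1 then EQ P x i else false.
Proof. by []. Qed.

Lemma toAD_AD n M (P : protocol n M) : (0 < n)%N -> solves_CD P -> solves_AD (toAD P).
Proof.
move=> n0 HC x; split.
- move=> H; have i0 : (n.-1 < n)%N by rewrite prednK.
  apply/(HC x (Ordinal i0)) => //.
  by have := H (Ordinal i0); rewrite toAD_EQ /= eqxx.
- move=> He i; rewrite toAD_EQ; case: ifP => // /eqP vi.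
  by apply/(HC x i vi).
Qed.

Theorem mainTheorem6 (R : realType) (n M : nat) :
  (2 <= n)%N -> (1 <= M)%N ->
  C_AD R n M <= C_CD R n M /\
  (n%:R / 2) * log2 (M%:R : R) <= C_AD R n M.
Proof.
move=> n2 M1.
have lbA : lbound [set c : R | exists P : protocol n M, solves_AD P /\ c = cost P R]
             ((n%:R / 2) * log2 (M%:R : R)).
  by move=> c [P [HP ->]]; apply: cost_lb.
have [n' en] : exists n', n = n'.+1 by exists n.-1; rewrite prednK //; apply: ltnW.
have neC : [set c : R | exists P : protocol n M, solves_CD P /\ c = cost P R] !=set0.
  subst n; exists (cost (trivP n' M) R); exists (trivP n' M); split => //.
  exact: trivP_CD.
have neA : [set c : R | exists P : protocol n M, solves_AD P /\ c = cost P R] !=set0.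
  case: neC => c [P [HP _]]; exists (cost P R); exists (toAD P); split => //.
  by apply: toAD_AD => //; apply: ltnW.
split; last exact: lb_le_inf.
apply: lb_le_inf => // c [P [HP ->]].
apply: (ge_inf (ex_intro _ _ lbA)).
by exists (toAD P); split; [apply: toAD_AD => //; apply: ltnW | ].
Qed.
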